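(* Let $\mathcal{S},\mathcal{A}$ be finite, $\gamma\in(0,1)$, and consider an MDP with $(\tilde r(s,a),\tilde s')\sim P(\cdot,\cdot\mid s,a)$, $\tilde r(s,a)\in[0,1]$ almost surely. Let $\rho$ be a coherent risk measure and $d$ a probability distribution on $\mathcal{S}$ with $0<d(s)\le1$. Let $\pi_\theta$ be the softmax policy $\pi_\theta(a\mid s)=\exp(\theta(s,a))/\sum_b\exp(\theta(s,b))$ and let $$\theta_{t+1}=\theta_t+\eta\,\nabla_\theta\Big[\sum_s d(s)\sum_a\pi_\theta(a\mid s)Q^{\pi_t}(s,a)\Big]\Big|_{\theta=\theta_t},$$ with $\pi_t=\pi_{\theta_t}$ and $Q^{\pi_t}$ held fixed. If $\eta\le(1-\gamma)/5$, then for all $s\in\mathcal{S}$, $$\sum_a\pi_{t+1}(a\mid s)Q^{\pi_t}(s,a)\ge\sum_a\pi_t(a\mid s)Q^{\pi_t}(s,a).$$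
   Context: A coherent risk measure $\rho$ satisfies concavity, monotonicity ($\tilde x\le\tilde y\Rightarrow\rho(\tilde x)\le\rho(\tilde y)$), translation invariance $\rho(\tilde x+c)=\rho(\tilde x)+c$, and positive homogeneity $\rho(\lambda\tilde x)=\lambda\rho(\tilde x)$ for $\lambda\ge0$. For a stochastic policy $\pi$, $Q^\pi$ is the unique fixed point of $(\mathcal{T}^\pi Q)(s,a)=\rho\big(\tilde r(s,a)+\gamma\sum_{a'}\pi(a'\mid\tilde s')Q(\tilde s',a')\big)$, $\rho$ taken over the joint law of $(\tilde r(s,a),\tilde s')$. *)

(* Defs.v *)
From HB Require Import structures.
From mathcomp Require Import all_boot all_order all_algebra.
From mathcomp Require Import all_classical all_reals all_analysis.
Set Implicit Arguments. Unset Strict Implicit. Unset Printing Implicit Defensive.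
Import Order.TTheory GRing.Theory Num.Theory.
Import numFieldNormedType.Exports.
Local Open Scope classical_set_scope.
Local Open Scope ring_scope.

Definition bmeas (d : measure_display) (Om : measurableType d) (R : realType)
  (X : Om -> R) : Prop :=
  measurable_fun setT X /\ exists M : R, forall w, `|X w| <= M.

Record coherent (d : measure_display) (Om : measurableType d) (R : realType)
  (P : probability Om R) (rho : (Om -> R) -> R) : Prop := {
  coh_concave : forall (X Y : Om -> R) (l : R), bmeas X -> bmeas Y ->
    0 <= l <= 1 ->
    l * rho X + (1 - l) * rho Y <= rho (fun w => l * X w + (1 - l) * Y w);
  coh_monotone : forall X Y : Om -> R, bmeas X -> bmeas Y ->
    {ae P, forall w, X w <= Y w} -> rho X <= rho Y;
  coh_transl : forall (X : Om -> R) (c : R), bmeas X ->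
    rho (fun w => X w + c) = rho X + c;
  coh_homog : forall (X : Om -> R) (l : R), bmeas X -> 0 <= l ->
    rho (fun w => l * X w) = l * rho X }.

Definition softmax (R : realType) (S A : finType) (th : S -> A -> R) (s : S) (a : A) : R :=
  expR (th s a) / \sum_(b : A) expR (th s b).

(* risk-sensitive Bellman operator T^pi; the MDP transition P(.,.|s,a) is realised
   by the random pair (r s a, s' s a) on the probability space *)
Definition bellman (d : measure_display) (Om : measurableType d) (R : realType)
  (S A : finType) (rho : (Om -> R) -> R) (r : S -> A -> Om -> R) (s' : S -> A -> Om -> S)
  (gamma : R) (pi : S -> A -> R) (Q : S -> A -> R) (s : S) (a : A) : R :=
  rho (fun w => r s a w + gamma * \sum_(a' : A) pi (s' s a w) a' * Q (s' s a w) a').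

Definition is_Qpi (d : measure_display) (Om : measurableType d) (R : realType)
  (S A : finType) (rho : (Om -> R) -> R) (r : S -> A -> Om -> R) (s' : S -> A -> Om -> S)
  (gamma : R) (pi : S -> A -> R) (Q : S -> A -> R) : Prop :=
  (forall s a, Q s a = bellman rho r s' gamma pi Q s a) /\
  (forall Q' : S -> A -> R, (forall s a, Q' s a = bellman rho r s' gamma pi Q' s a) -> Q' = Q).

Definition upd (R : realType) (S A : finType) (th : S -> A -> R) (s : S) (a : A) (x : R) :
  S -> A -> R :=
  fun s1 a1 => if (s1 == s) && (a1 == a) then x else th s1 a1.

Definition grad (R : realType) (S A : finType) (J : (S -> A -> R) -> R)
  (th : S -> A -> R) (s : S) (a : A) : R :=
  derive1 (fun x : R => J (upd th s a x)) (th s a).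

Definition surrogate (R : realType) (S A : finType) (dist : S -> R) (Q : S -> A -> R)
  (th : S -> A -> R) : R :=
  \sum_(s : S) dist s * \sum_(a : A) softmax th s a * Q s a.

(* Main.v *)
Require Import Defs.
From HB Require Import structures.
From mathcomp Require Import all_boot all_order all_algebra.
From mathcomp Require Import all_classical all_reals all_analysis.
From mathcomp Require Import ring lra.
Import Order.TTheory GRing.Theory Num.Theory.
Import numFieldNormedType.Exports.
Local Open Scope classical_set_scope.
Local Open Scope ring_scope.

Lemma deriv_aux (R : realType) (C d q K1 K2 x0 : R) (hK : 0 <= K2) :
  derive1 (fun x : R => C + d * ((expR x * q + K1) / (expR x + K2))) x0 =
  d * (expR x0 / (expR x0 + K2)) * (q - (expR x0 * q + K1) / (expR x0 + K2)).
Proof.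
have hD : expR x0 + K2 != 0 by rewrite gt_eqF // ltr_pwDl // expR_gt0.
have H1 : is_derive x0 (1:R) (fun x : R => expR x * q) (expR x0 * q).
  have := is_deriveM (is_derive_expR x0) (is_derive_cst q x0 1).
  rewrite /= scaler0 add0r /GRing.scale /= [q * _]mulrC.
  exact.
have N : is_derive x0 (1:R) (fun x : R => expR x * q + K1) (expR x0 * q).
  have := is_deriveD H1 (is_derive_cst K1 x0 1).
  rewrite addr0. exact.
have Dn : is_derive x0 (1:R) (fun x : R => expR x + K2) (expR x0).
  have := is_deriveD (is_derive_expR x0) (is_derive_cst K2 x0 1).
  rewrite addr0. exact.
have Dv := @is_deriveV _ (fun x : R => expR x + K2) x0 (expR x0) 1 hD Dn.
have Q1 := is_deriveM N Dv.
have Q2 := is_deriveM (is_derive_cst d x0 1) Q1.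
have F := is_deriveD (is_derive_cst C x0 1) Q2.
rewrite derive1E.
rewrite (@derive_val _ _ _ _ _ _ _ F).
rewrite /GRing.scale /= mulr0 addr0 add0r.
field.
by [].
Qed.

Lemma softmax_sum (R : realType) (S A : finType) (th : S -> A -> R) (Q : S -> A -> R) s :
  \sum_a softmax th s a * Q s a =
  (\sum_a expR (th s a) * Q s a) / \sum_b expR (th s b).
Proof.
rewrite mulr_suml; apply: eq_bigr => a _.
by rewrite /softmax mulrAC.
Qed.

Lemma grad_eq (R : realType) (S A : finType) (dist : S -> R) (Q : S -> A -> R)
  (th : S -> A -> R) s a :
  grad (surrogate dist Q) th s a =
  dist s * softmax th s a * (Q s a - \sum_b softmax th s b * Q s b).
Proof.
pose C := \sum_(s1 | s1 != s) dist s1 * \sum_a1 softmax th s1 a1 * Q s1 a1.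
pose K1 := \sum_(b | b != a) expR (th s b) * Q s b.
pose K2 := \sum_(b | b != a) expR (th s b).
have K2ge : 0 <= K2 by apply: sumr_ge0 => b _; exact: expR_ge0.
have E : (fun x => surrogate dist Q (upd th s a x)) =
         (fun x => C + dist s * ((expR x * Q s a + K1) / (expR x + K2))).
  apply: funext => x.
  rewrite /surrogate (bigD1 s) //= addrC; congr (_ + _).
    apply: eq_bigr => s1 Hs1; congr (_ * _); apply: eq_bigr => a1 _.
    by rewrite /softmax /upd (negbTE Hs1).
  congr (_ * _); rewrite softmax_sum; congr (_ / _).
    rewrite (bigD1 a) //= /upd !eqxx /=; congr (_ + _).
    by apply: eq_bigr => b Hb; rewrite ?eqxx (negbTE Hb).
  rewrite (bigD1 a) //= /upd !eqxx /=; congr (_ + _).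
  by apply: eq_bigr => b Hb; rewrite ?eqxx (negbTE Hb).
rewrite /grad E deriv_aux //.
have ZE : \sum_b expR (th s b) = expR (th s a) + K2 by rewrite (bigD1 a).
have NE : \sum_b expR (th s b) * Q s b = expR (th s a) * Q s a + K1 by rewrite (bigD1 a).
by rewrite softmax_sum /softmax ZE NE.
Qed.

Lemma pointwise (R : realType) (e c t : R) : 0 < e -> 0 <= c ->
  e * t <= e * expR (c * t) * t.
Proof.
move=> he hc; rewrite -mulrA ler_pM2l //.
have [ht|ht] := leP 0 t.
  rewrite -{1}[t]mul1r ler_wpM2r //.
  by rewrite -expR0 ler_expR mulr_ge0.
rewrite -{1}[t]mul1r ler_nM2r //.
by rewrite -expR0 ler_expR mulr_ge0_le0 // ltW.
Qed.

Theorem lemma3 (R : realType) (S A : finType)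
  (d : measure_display) (Om : measurableType d) (P : probability Om R)
  (r : S -> A -> Om -> R) (s' : S -> A -> Om -> S)
  (rho : (Om -> R) -> R) (gamma eta : R) (dist : S -> R)
  (Q : S -> A -> R) (th_t th_t1 : S -> A -> R) :
  0 < gamma < 1 ->
  (forall s a, measurable_fun setT (r s a)) ->
  (forall s a (s0 : S), measurable (s' s a @^-1` [set s0])) ->
  (forall s a, {ae P, forall w, 0 <= r s a w <= 1}) ->
  coherent P rho ->
  (forall s, 0 < dist s <= 1) -> \sum_(s : S) dist s = 1 ->
  is_Qpi rho r s' gamma (softmax th_t) Q ->
  th_t1 = (fun s a => th_t s a + eta * grad (surrogate dist Q) th_t s a) ->
  0 < eta -> eta <= (1 - gamma) / 5 ->
  forall s : S,
    \sum_(a : A) softmax th_t1 s a * Q s a >= \sum_(a : A) softmax th_t s a * Q s a.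
Proof.
move=> _ _ _ _ _ hd _ _ -> heta _ s.
set V := \sum_a softmax th_t s a * Q s a.
have [a0 _|none] := pickP (@predT A); last first.
  by rewrite /V !big1 // => a; have := none a.
have Zpos : forall th : S -> A -> R, 0 < \sum_b expR (th s b).
  move=> th; rewrite (bigD1 a0) //= ltr_pwDl ?expR_gt0 //.
  by apply: sumr_ge0 => b _; exact: expR_ge0.
have V0 : \sum_a expR (th_t s a) * (Q s a - V) = 0.
  have : V * \sum_b expR (th_t s b) = \sum_a expR (th_t s a) * Q s a.
    by rewrite /V softmax_sum mulrVK // unitfE gt_eqF.
  rewrite mulr_sumr => HV.
  under eq_bigr do rewrite mulrBr.
  by rewrite sumrB -HV; under eq_bigr do rewrite mulrC; rewrite subrr.
rewrite softmax_sum ler_pdivlMr; last exact: (Zpos (fun s a => th_t s a + eta * grad (surrogate dist Q) th_t s a)).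
rewrite big_distrr /= -subr_ge0 -sumrB.
rewrite -[X in X <= _]V0; apply: ler_sum => a _.
rewrite grad_eq -/V [V * _]mulrC -mulrBr expRD.
have Hc : 0 <= eta * dist s * softmax th_t s a.
  apply: mulr_ge0; first apply: mulr_ge0; first exact: ltW.
    by case/andP: (hd s) => /ltW.
  rewrite /softmax; apply: divr_ge0; first exact: expR_ge0.
  exact: ltW (Zpos th_t).
have := @pointwise R (expR (th_t s a)) _ (Q s a - V) (expR_gt0 _) Hc.
by rewrite !mulrA.
Qed.
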